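(* Let $C$ be an $E$-linear code of length $2n$. Then (1) $C^{\perp_{S_L}}=\kappa (C_{Res})^{\perp_S}\oplus \zeta (C_{Res})^{\perp_S}$; (2) $C^{\perp_{S_R}}=\kappa (C_{Tor})^{\perp_S}\oplus \zeta \mathbb{F}_2^{2n}$; (3) $C^{\perp_S}=\kappa (C_{Tor})^{\perp_S}\oplus \zeta (C_{Res})^{\perp_S}$.
   Context: $E=\langle \kappa,\tau \mid 2\kappa=2\tau=0,\ \kappa^2=\kappa,\ \tau^2=\tau,\ \kappa\tau=\kappa,\ \tau\kappa=\tau\rangle$ is the non-unital ring $\{0,\kappa,\tau,\zeta\}$, $\zeta=\kappa+\tau$, with $e\kappa=e\tau=e$, $e\zeta=0$ for all $e\in E$. Every $e\in E$ is uniquely $u\kappa+v\zeta$ ($u,v\in\mathbb{F}_2$); $\pi(u\kappa+v\zeta)=u$, componentwise. For $v\in\mathbb{F}_2^m$ and $e\in E$, $ev=(ev_1,\dots,ev_m)$ with $0\cdot e=0$, $1\cdot e=e$; for binary codes $A,B$, $\kappa A\oplus\zeta B=\{\kappa a+\zeta b: a\in A,b\in B\}$. An $E$-linear code of length $2n$ is a left $E$-submodule $C\subseteq E^{2n}$; $C_{Res}=\pi(C)$, $C_{Tor}=\{v\in\mathbb{F}_2^{2n}:\zeta v\in C\}$. Symplectic inner product (over $E$ or $\mathbb{F}_2$): $\langle (u|v),(u'|v')\rangle_s=\sum_i u_iv'_i+\sum_i v_iu'_i$. For binary $B$, $B^{\perp_S}=\{z\in\mathbb{F}_2^{2n}:\langle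 z,w\rangle_s=0\ \forall w\in B\}$. For $E$-linear $C$: $C^{\perp_{S_L}}=\{z\in E^{2n}:\langle z,w\rangle_s=0\ \forall w\in C\}$, $C^{\perp_{S_R}}=\{z\in E^{2n}:\langle w,z\rangle_s=0\ \forall w\in C\}$, $C^{\perp_S}=C^{\perp_{S_L}}\cap C^{\perp_{S_R}}$. *)

(* Defs.v *)
From HB Require Import structures.
From mathcomp Require Import all_boot all_order all_algebra.
Set Implicit Arguments. Unset Strict Implicit. Unset Printing Implicit Defensive.
Import GRing.Theory.
Local Open Scope ring_scope.

(* The ring E = {0, kappa, tau, zeta} is represented through the unique
   decomposition e = u*kappa + v*zeta (u, v in F_2): the element u kappa + v zeta
   is the pair (u, v). *)
Definition E : Type := ('F_2 * 'F_2)%type.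

Definition Ezero : E := (0, 0).
Definition kappa : E := (1, 0).
Definition zeta  : E := (0, 1).
Definition tau   : E := (1, 1).

Definition Eadd (x y : E) : E := (x.1 + y.1, x.2 + y.2).

(* Multiplication: e*kappa = e, e*zeta = 0, extended bilinearly:
   (u kappa + v zeta)(u' kappa + v' zeta) = u' (u kappa + v zeta). *)
Definition Emul (x y : E) : E := (x.1 * y.1, x.2 * y.1).

Definition Epi (x : E) : 'F_2 := x.1.

Definition Escale (b : 'F_2) (e : E) : E := (b * e.1, b * e.2).

Lemma E_presentation :
  (Eadd kappa kappa = Ezero /\ Eadd tau tau = Ezero) /\
  (Emul kappa kappa = kappa /\ Emul tau tau = tau) /\
  (Emul kappa tau = kappa /\ Emul tau kappa = tau) /\
  zeta = Eadd kappa tau /\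
  (forall e : E, Emul e kappa = e /\ Emul e tau = e /\ Emul e zeta = Ezero).
Proof.
have h11 : (1 + 1 : 'F_2) = 0 by apply/eqP.
rewrite /Eadd /Emul /kappa /tau /zeta /Ezero /= h11 ?mulr1 ?mulr0 ?add0r ?addr0.
do !split=> //; move: e => [u v]; rewrite /= ?mulr1 ?mulr0 //.
Qed.

(* Vectors of length 2n, written (u | v) with u, v of length n:
   index lshift n i is u_i, rshift n i is v_i. *)
Definition Evec (n : nat) := {ffun 'I_(n + n) -> E}.
Definition Bvec (n : nat) := {ffun 'I_(n + n) -> 'F_2}.

Definition Evadd n (x y : Evec n) : Evec n := [ffun i => Eadd (x i) (y i)].
Definition Evscale n (e : E) (x : Evec n) : Evec n := [ffun i => Emul e (x i)].
Definition Evzero n : Evec n := [ffun _ => Ezero].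

Definition Ebv n (e : E) (v : Bvec n) : Evec n := [ffun i => Escale (v i) e].

Definition Elinear n (C : {set Evec n}) : Prop :=
  [/\ Evzero n \in C,
      (forall x y, x \in C -> y \in C -> Evadd x y \in C) &
      (forall e x, x \in C -> Evscale e x \in C)].

Definition Res n (C : {set Evec n}) : {set Bvec n} :=
  [set ([ffun i => Epi (x i)] : Bvec n) | x : Evec n in C].
Definition Tor n (C : {set Evec n}) : {set Bvec n} :=
  [set v : Bvec n | Ebv zeta v \in C].

Definition Esum (s : seq E) : E := foldr Eadd Ezero s.
Definition sympE n (x y : Evec n) : E :=
  Eadd (Esum [seq Emul (x (lshift n i)) (y (rshift n i)) | i <- enum 'I_n])
       (Esum [seq Emul (x (rshift n i)) (y (lshift n i)) | i <- enum 'I_n]).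
Definition sympB n (x y : Bvec n) : 'F_2 :=
  \sum_(i < n) x (lshift n i) * y (rshift n i)
  + \sum_(i < n) x (rshift n i) * y (lshift n i).

Definition perpB n (B : {set Bvec n}) : {set Bvec n} :=
  [set z | [forall w in B, sympB z w == 0]].
Definition perpL n (C : {set Evec n}) : {set Evec n} :=
  [set z | [forall w in C, sympE z w == Ezero]].
Definition perpR n (C : {set Evec n}) : {set Evec n} :=
  [set z | [forall w in C, sympE w z == Ezero]].
Definition perpS n (C : {set Evec n}) : {set Evec n} := perpL C :&: perpR C.

Definition kzsum n (A B : {set Bvec n}) : {set Evec n} :=
  [set x | [exists a in A, exists b in B, x == Evadd (Ebv kappa a) (Ebv zeta b)]].

(* Main.v *)
Require Import Defs.
From mathcomp Require Import all_boot all_order all_algebra.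
Import GRing.Theory.
Local Open Scope ring_scope.
Lemma F2xx (x : 'F_2) : x + x = 0.
Proof. by case: x => [[|[|k]] Hk]; apply/val_inj. Qed.
Lemma Esum_map (T : Type) (s : seq T) (f : T -> E) :
  Esum [seq f i | i <- s] = (\sum_(i <- s) (f i).1, \sum_(i <- s) (f i).2).
Proof. elim: s => [|a s IH] /=; first by rewrite !big_nil.
by rewrite IH !big_cons. Qed.
Lemma sumenum n (F : 'I_n -> 'F_2) : \sum_(i <- enum 'I_n) F i = \sum_(i < n) F i.
Proof. by rewrite big_enum. Qed.
Definition fstv {n} (x : Evec n) : Bvec n := [ffun i => (x i).1].
Definition sndv {n} (x : Evec n) : Bvec n := [ffun i => (x i).2].

Lemma sympE_eq n (z w : Evec n) :
  sympE z w = (sympB (fstv z) (fstv w), sympB (sndv z) (fstv w)).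
Proof.
rewrite /sympE /sympB !Esum_map /Eadd /= !sumenum.
by congr (_, _); congr (_ + _); apply: eq_bigr => i _; rewrite !ffunE.
Qed.

Lemma sympBC {n} (x y : Bvec n) : sympB x y = sympB y x.
Proof.
rewrite /sympB addrC; congr (_ + _); apply: eq_bigr => i _; exact: mulrC.
Qed.

Lemma kzsumP n (A B : {set Bvec n}) x :
  (x \in kzsum A B) = (fstv x \in A) && (sndv x \in B).
Proof.
rewrite inE; apply/existsP/andP.
- case=> a /andP [Ha /existsP [b /andP [Hb /eqP ->]]].
  have -> : fstv (Evadd (Ebv kappa a) (Ebv zeta b)) = a.
    by apply/ffunP => i; rewrite !ffunE /= mulr1 mulr0 addr0.
  have -> : sndv (Evadd (Ebv kappa a) (Ebv zeta b)) = b.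
    by apply/ffunP => i; rewrite !ffunE /= mulr1 mulr0 add0r.
  by [].
- case=> Ha Hb; exists (fstv x); rewrite Ha /=; apply/existsP; exists (sndv x).
  rewrite Hb /=; apply/eqP/ffunP => i; rewrite !ffunE /= ?mulr1 ?mul1r ?mulr0 ?mul0r ?addr0 ?add0r.
  by case: (x i) => a b; rewrite /Eadd /Escale /= !mulr1 !mulr0 addr0 add0r.
Qed.

Lemma pair0 (a b : 'F_2) : ((a, b) == Ezero) = (a == 0) && (b == 0).
Proof. by []. Qed.

Theorem mainTheorem6 (n : nat) (C : {set Evec n}) (HC : Elinear C) :
  [/\ perpL C = kzsum (perpB (Res C)) (perpB (Res C)),
      perpR C = kzsum (perpB (Tor C)) [set: Bvec n] &
      perpS C = kzsum (perpB (Tor C)) (perpB (Res C))].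
Proof.
case: HC => H0 HD HS.
have ResE : forall v, (v \in Res C) = [exists w in C, v == fstv w].
  move=> v; apply/imsetP/exists_inP => [[w Hw ->]|[w Hw /eqP ->]]; by exists w.
have fstTor : forall w, w \in C -> fstv w \in Tor C.
  move=> w Hw; rewrite inE.
  have -> : Ebv zeta (fstv w) = Evscale zeta w.
    by apply/ffunP => i; rewrite !ffunE /Escale /Emul /= mulr0 mul0r mulr1 mul1r.
  exact: HS.
have sndTor : forall w, w \in C -> sndv w \in Tor C.
  move=> w Hw; rewrite inE.
  have -> : Ebv zeta (sndv w) = Evadd w (Evscale kappa w).
    apply/ffunP => i; rewrite !ffunE /Escale /Emul /Eadd /= mulr0 mulr1 mul1r F2xx.
    by rewrite mul0r addr0.
  by apply: HD => //; apply: HS.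
have TorC : forall v, v \in Tor C -> Ebv zeta v \in C by move=> v; rewrite inE.
have fstZ : forall v : Bvec n, fstv (Ebv zeta v) = [ffun=> 0].
  by move=> v; apply/ffunP => i; rewrite !ffunE /= mulr0.
have sndZ : forall v : Bvec n, sndv (Ebv zeta v) = v.
  by move=> v; apply/ffunP => i; rewrite !ffunE /= mulr1.
have symp0 : forall z : Bvec n, sympB [ffun=> 0] z = 0.
  by move=> z; rewrite /sympB !big1 ?addr0 // => i _; rewrite ffunE mul0r.
have perpRes : forall z : Bvec n, (z \in perpB (Res C)) = [forall w in C, sympB z (fstv w) == 0].
  move=> z; rewrite inE; apply/forall_inP/forall_inP => H w Hw.
    by apply: H; rewrite ResE; apply/exists_inP; exists w.
  by move: Hw; rewrite ResE => /exists_inP [w' Hw' /eqP ->]; apply: H.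
have perpTor : forall z : Bvec n, (z \in perpB (Tor C)) =
     [forall w in C, (sympB (fstv w) z == 0) && (sympB (sndv w) z == 0)].
  move=> z; rewrite inE; apply/forall_inP/forall_inP => H w Hw.
    apply/andP; split; rewrite sympBC; apply: H; by [apply: fstTor | apply: sndTor].
  by case/andP: (H _ (TorC _ Hw)) => _; rewrite sndZ sympBC.
have LP : forall z, (z \in perpL C) = (fstv z \in perpB (Res C)) && (sndv z \in perpB (Res C)).
  move=> z; rewrite inE !perpRes; apply/forall_inP/andP.
    move=> H; split; apply/forall_inP => w Hw; move: (H w Hw);
      by rewrite sympE_eq pair0 => /andP [].
  case=> /forall_inP H1 /forall_inP H2 w Hw; rewrite sympE_eq pair0.
  by rewrite H1 ?H2.
have RP : forall z, (z \in perpR C) = (fstv z \in perpB (Tor C)).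
  move=> z; rewrite inE perpTor; apply/forall_inP/forall_inP => H w Hw;
    by move: (H w Hw); rewrite sympE_eq pair0.
have TR : forall z, z \in perpB (Tor C) -> z \in perpB (Res C).
  move=> z; rewrite perpTor perpRes => /forall_inP H; apply/forall_inP => w Hw.
  by rewrite sympBC; case/andP: (H w Hw).
split; apply/setP => z.
- by rewrite LP kzsumP.
- by rewrite RP kzsumP in_setT andbT.
- rewrite inE LP RP kzsumP.
  have := TR (fstv z); case: (fstv z \in perpB (Tor C)) => [-> //|_]; by rewrite ?andbT ?andbF.
Qed.
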